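(* Let $G$ be a group given by a presentation $\langle X\mid R\rangle$ in which every $x\in X$ satisfies $x^2=e$ and every relation in $R$ has even length. Let $I=X\setminus\{x\}$ for some $x\in X$, and let $w\in G$ with $w\neq e$. Then $w\in {}^{I}G$ if and only if all reduced expressions of $w$ begin with $x$.
   Context: Every $w\in G$ can be written as a product $x_1^{a_1}\cdots x_r^{a_r}$ with $x_j\in X$, $a_j=\pm1$; the length $l(w)$ is the smallest such $r$, and a reduced expression of $w$ is an expression of $w$ as a product of $l(w)$ elements of $X\cup X^{-1}$. The length of a relation $u=v$ ($u,v$ in the free group $F(X)$) is the length of the word $uv^{-1}$ in $F(X)$. For $I\subseteq X$, ${}^{I}G=\{w\in G: l(yw)>l(w)\ \text{for all } y\in I\}$. *)

(* Defs.v *)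
From mathcomp Require Import all_boot.
Set Implicit Arguments. Unset Strict Implicit. Unset Printing Implicit Defensive.

Record group := Group {
  carrier :> Type;
  gmul : carrier -> carrier -> carrier;
  ginv : carrier -> carrier;
  gone : carrier;
  gmulA : forall a b c, gmul a (gmul b c) = gmul (gmul a b) c;
  gmul1 : forall a, gmul gone a = a;
  gmulV : forall a, gmul (ginv a) a = gone
}.

Section Words.
Variable X : eqType.

(* A word in F(X): a sequence of letters x^{+1} (false) or x^{-1} (true). *)
Definition word := seq (X * bool).

Definition inv_word (w : word) : word := rev [seq (p.1, ~~ p.2) | p <- w].

Definition push (p : X * bool) (s : word) : word :=
  match s with
  | q :: s' => if (q.1 == p.1) && (q.2 == ~~ p.2) then s' else p :: s
  | [::] => [:: p]
  end.
Definition free_reduce (w : word) : word := foldr push [::] w.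

(* Length of the relation u = v: length of the reduced word u v^{-1} in F(X). *)
Definition rel_length (r : word * word) : nat :=
  size (free_reduce (r.1 ++ inv_word r.2)).

Inductive pcong (R : word * word -> Prop) : word -> word -> Prop :=
| pc_refl w : pcong R w w
| pc_sym w1 w2 : pcong R w1 w2 -> pcong R w2 w1
| pc_trans w1 w2 w3 : pcong R w1 w2 -> pcong R w2 w3 -> pcong R w1 w3
| pc_free a b x s : pcong R (a ++ [:: (x, s); (x, ~~ s)] ++ b) (a ++ b)
| pc_rel a b u v : R (u, v) -> pcong R (a ++ u ++ b) (a ++ v ++ b).

Variable G : group.
Variable gen : X -> G.

Definition letter (p : X * bool) : G := if p.2 then ginv (gen p.1) else gen p.1.

Definition eval (w : word) : G := foldr (fun p acc => gmul (letter p) acc) (gone G) w.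

Definition presents (R : word * word -> Prop) : Prop :=
  (forall g : G, exists w, eval w = g) /\
  (forall w1 w2, eval w1 = eval w2 <-> pcong R w1 w2).

Definition reduced_expr (g : G) (w : word) : Prop :=
  eval w = g /\ forall w', eval w' = g -> size w <= size w'.

Definition is_length (g : G) (n : nat) : Prop :=
  exists w, reduced_expr g w /\ size w = n.

Definition in_IG (I : pred X) (g : G) : Prop :=
  forall y, I y -> forall n m, is_length (gmul (gen y) g) n -> is_length g m -> m < n.

End Words.

(* Main.v *)
From Stdlib Require Import Classical.
Require Import Defs.
From mathcomp Require Import all_boot.


Section Aux.
Variable G : group.

Lemma gmulRV (a : G) : gmul a (ginv a) = gone G.
Proof.
rewrite -[LHS]gmul1 -[X in gmul X _](gmulV (ginv a)) -gmulA.
by rewrite [X in gmul _ X]gmulA gmulV gmul1 gmulV.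
Qed.

Lemma gmulr1 (a : G) : gmul a (gone G) = a.
Proof. by rewrite -(gmulV a) gmulA gmulRV gmul1. Qed.
End Aux.

Lemma odd_push (X : eqType) (p : X * bool) s : odd (size (push p s)) = ~~ odd (size s).
Proof.
case: s => [|q s] //=. case: ifP => _ /=; by rewrite negbK.
Qed.

Lemma odd_fr (X : eqType) (w : word X) : odd (size (free_reduce w)) = odd (size w).
Proof. elim: w => //= p w IH; by rewrite odd_push IH. Qed.

Lemma pcong_odd (X : eqType) (R : word X * word X -> Prop)
  (Heven : forall r, R r -> ~~ odd (rel_length r)) w1 w2 :
  pcong R w1 w2 -> odd (size w1) = odd (size w2).
Proof.
elim => //.
- by move=> ? ? ? _ h1 _ h2; rewrite h1 h2.
- by move=> a b x s; rewrite !size_cat !oddD /= ?negbK.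
- move=> a b u v H; have := Heven _ H.
  rewrite /rel_length /= odd_fr size_cat /inv_word size_rev size_map oddD => h.
  rewrite !size_cat !oddD.
  by case: (odd (size u)) (odd (size v)) h => [] [].
Qed.

Theorem lemma3p2 (X : eqType) (G : group) (gen : X -> G)
  (R : word X * word X -> Prop)
  (Hpres : presents gen R)
  (Hinvol : forall x : X, gmul (gen x) (gen x) = gone G)
  (Heven : forall r, R r -> ~~ odd (rel_length r))
  (x : X) (w : G) (hw : w <> gone G) :
  in_IG gen (fun y => y != x) w <->
  (forall s, reduced_expr gen w s -> exists b t, s = (x, b) :: t).
Proof.
case: Hpres => Hsurj Hcong.
have par : forall w1 w2, eval gen w1 = eval gen w2 -> odd (size w1) = odd (size w2).
  by move=> w1 w2 /Hcong; apply: pcong_odd.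
have exred : forall g, exists r, reduced_expr gen g r.
  move=> g; have [w0 hw0] := Hsurj g.
  suff: forall n w', size w' <= n -> eval gen w' = g -> exists r, reduced_expr gen g r.
    by move/(_ (size w0) w0 (leqnn _) hw0).
  elim=> [|n IH] w' hs he.
    by exists w'; split=> // w'' _; rewrite (leq_trans hs).
  case: (classic (exists w'', eval gen w'' = g /\ size w'' < size w')).
    move=> [w'' [h1 h2]]; apply: (IH w'') => //.
    by rewrite -ltnS (leq_trans h2).
  move=> hn; exists w'; split=> // w'' h; rewrite leqNgt; apply/negP => hlt.
  by apply: hn; exists w''.
have ginvgen : forall y, ginv (gen y) = gen y.
  move=> y; rewrite -[LHS]gmulr1 -(Hinvol y) gmulA gmulV gmul1 //.
have letgen : forall y b, letter gen (y, b) = gen y.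
  by move=> y [] //=; rewrite /letter /= ginvgen.
have cancel2 : forall y a, gmul (gen y) (gmul (gen y) a) = a.
  by move=> y a; rewrite gmulA Hinvol gmul1.
split.
- move=> HI s [hs hmin].
  case: s hs hmin => [|[y b] t] hs hmin.
    by exfalso; apply: hw; rewrite -hs.
  case: (eqVneq y x) => [->|hyx]; first by exists b, t.
  exfalso.
  have [r [hr1 hr2]] := exred (gmul (gen y) w).
  have := HI y hyx (size r) (size ((y, b) :: t)).
  have hlen : is_length gen (gmul (gen y) w) (size r) by exists r.
  have hlen2 : is_length gen w (size ((y, b) :: t)) by exists ((y, b) :: t).
  move=> /(_ hlen hlen2).
  have : size r <= size t.
    apply: hr2; rewrite -hs /= letgen cancel2 //.
  move=> h1 h2; have := leq_trans h2 h1; rewrite /= => h3; by move: (leq_trans (leqnSn _) h3); rewrite ltnn.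
- move=> Hall y hyx n m [t [[ht1 ht2] hnt]] [s [[hs1 hs2] hms]].
  have hpar : odd n != odd m.
    rewrite -hnt -hms.
    have e : eval gen ((y, false) :: t) = eval gen s by rewrite /= ht1 hs1 cancel2.
    by rewrite -(par _ _ e) /= ?negbK; case: (odd _).
  rewrite ltn_neqAle; apply/andP; split.
    by apply/negP => /eqP e; move: hpar; rewrite e eqxx.
  rewrite leqNgt; apply/negP => hlt.
  have e : eval gen ((y, false) :: t) = w by rewrite /= ht1 cancel2.
  have h1 := hs2 _ e.
  have hred : reduced_expr gen w ((y, false) :: t).
    split=> // w'' h''; rewrite /= hnt (leq_trans hlt) // -hms; exact: hs2.
  have [b [t' ]] := Hall _ hred.
  by case=> hyx'; move: hyx; rewrite hyx' eqxx.
Qed.
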